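(* Let $A$ be an $n\times m$ matrix with entries in $\{0,1,-1\}$, $n\ge 2$. (i) If each column of $A$ has at most two nonzero entries, then for each $B\in\mathcal{Q}_0(A^t)$, $AB$ and $(AB)^{[2]}$ are $P_0$-matrices, and $AB$ is positive semistable. (ii) If each row of $A$ has at most two nonzero entries, then for each $B\in\mathcal{Q}_0(A^t)$, $AB$ is positive semistable.
   Context: For $M\in\mathbb{R}^{n\times m}$, $\mathcal{Q}(M)$ is the set of real matrices with the same entrywise sign pattern as $M$, and $\mathcal{Q}_0(M)$ its closure. A square real matrix is a $P_0$-matrix if all principal minors are nonnegative, and positive semistable if all eigenvalues have nonnegative real part. $M^{[2]}$ denotes the second additive compound of $M\in\mathbb{R}^{n\times n}$: the matrix of $u\wedge v\mapsto Mu\wedge v+u\wedge Mv$ on $\Lambda^2\mathbb{R}^n$ in the lexicographically ordered basis $e_i\wedge e_j$, $i<j$. *)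

(* Defs.v *)
From HB Require Import structures.
From mathcomp Require Import all_boot all_order all_algebra.
From mathcomp Require Import complex.
Set Implicit Arguments. Unset Strict Implicit. Unset Printing Implicit Defensive.
Import Order.TTheory GRing.Theory Num.Theory.
Local Open Scope ring_scope.

Definition in_Q (R : realDomainType) n m (M B : 'M[R]_(n, m)) : Prop :=
  forall i j, Num.sg (B i j) = Num.sg (M i j).

(* Q_0(M): closure of Q(M), i.e. each entry of B is 0 or has the sign of
   the corresponding entry of M. *)
Definition in_Q0 (R : realDomainType) n m (M B : 'M[R]_(n, m)) : Prop :=
  forall i j, Num.sg (B i j) = 0 \/ Num.sg (B i j) = Num.sg (M i j).

Definition principal_submx (R : pzRingType) n (M : 'M[R]_n) (S : {set 'I_n}) :
  'M[R]_#|S| := \matrix_(i, j) M (enum_val i) (enum_val j).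

Definition P0_matrix (R : realDomainType) n (M : 'M[R]_n) : Prop :=
  forall S : {set 'I_n}, 0 <= \det (principal_submx M S).

Definition pos_semistable (R : rcfType) n (M : 'M[R]_n) : Prop :=
  forall z : R[i], eigenvalue (map_mx (@real_complex R) M) z -> 0 <= complex.Re z.

(* basis e_i /\ e_j, i < j, in lexicographic order *)
Definition wedge_pairs n : seq ('I_n * 'I_n) :=
  [seq (i, j) | i : 'I_n <- enum 'I_n, j : 'I_n <- filter (fun j : 'I_n => (i < j)%N) (enum 'I_n)].

Definition wp n (p : 'I_(size (wedge_pairs n))) : 'I_n * 'I_n :=
  tnth (in_tuple (wedge_pairs n)) p.

(* second additive compound: matrix of u/\v |-> Mu/\v + u/\Mv in the basis
   (e_i /\ e_j)_{i<j}, lexicographically ordered.  Entry in row e_k/\e_l,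
   column e_i/\e_j is the coefficient of e_k/\e_l in
   M e_i /\ e_j + e_i /\ M e_j. *)
Definition compound2 (R : pzRingType) n (M : 'M[R]_n) :
  'M[R]_(size (wedge_pairs n)) :=
  \matrix_(r, c)
    let: (k, l) := wp r in let: (i, j) := wp c in
      (j == l)%:R * M k i - (j == k)%:R * M l i
    + (i == k)%:R * M l j - (i == l)%:R * M k j.

(* Main.v *)
Require Import Defs.
From HB Require Import structures.
From mathcomp Require Import all_boot all_order all_algebra.
From mathcomp Require Import complex polyrcf.
From mathcomp.algebra_tactics Require Import lra.
Import Order.TTheory GRing.Theory Num.Theory.
Local Open Scope ring_scope.
Set Implicit Arguments. Unset Strict Implicit. Unset Printing Implicit Defensive.

Lemma exists_max (C : numDomainType) (I : finType) (i0 : I) (f : I -> C) :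
  (forall i, f i \is Num.real) -> exists j, forall i, f i <= f j.
Proof.
move=> fr.
suff [j Hj] : exists j, forall i, i \in enum I -> f i <= f j.
  by exists j => i; apply: Hj; rewrite mem_enum.
elim: (enum I) => [|x s [j IH]]; first by exists i0.
have /orP [le|le] := real_leVge (fr x) (fr j).
  exists j => i; rewrite inE => /orP [/eqP ->| /IH] //.
exists x => i; rewrite inE => /orP [/eqP ->| /IH] //.
by move=> H; apply: le_trans H le.
Qed.

Lemma gersh (C : numFieldType) n (N : 'M[C]_n) (v : 'rV[C]_n) z j :
  v *m N = z *: v -> (forall i, `|v 0 i| <= `|v 0 j|) ->
  `|z - N j j| * `|v 0 j| <= (\sum_(i | i != j) `|N i j|) * `|v 0 j|.
Proof.
move=> /matrixP /(_ 0 j); rewrite !mxE (bigD1 j) //= => E Hmax.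
have E2 : (z - N j j) * v 0 j = \sum_(i | i != j) v 0 i * N i j.
  by rewrite mulrBl -E [N j j * _]mulrC addrAC subrr add0r.
rewrite -normrM E2 mulr_suml.
apply: le_trans (ler_norm_sum _ _ _) _.
apply: ler_sum => i _; rewrite normrM mulrC; apply: ler_wpM2l => //.
Qed.

Definition coldom (R : numDomainType) n (N : 'M[R]_n) :=
  forall j, \sum_(i | i != j) `|N i j| <= N j j.

Lemma row_nz_idx (C : nzRingType) n (v : 'rV[C]_n) : v != 0 -> exists i, v 0 i != 0.
Proof.
move=> nz; case: (pickP (fun i => v 0 i != 0)) => [i Hi|H]; first by exists i.
case/negP: nz; apply/eqP/matrixP => a b; rewrite (ord1 a) mxE.
by move/negbFE: (H b) => /eqP.
Qed.

Lemma gersh_max (C : numFieldType) n (N : 'M[C]_n) (v : 'rV[C]_n) z :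
  v *m N = z *: v -> v != 0 ->
  exists j, `|z - N j j| <= \sum_(i | i != j) `|N i j|.
Proof.
move=> Hv nz; have [i0 Hi0] := row_nz_idx nz.
have [j Hj] := @exists_max C _ i0 (fun i => `|v 0 i|) (fun i => normr_real _).
exists j.
have vj : 0 < `|v 0 j| by apply: lt_le_trans (Hj i0); rewrite normr_gt0.
by rewrite -(ler_pM2r vj); apply: gersh.
Qed.

Lemma coldom_detD (R : realFieldType) n (N : 'M[R]_n) t :
  coldom N -> 0 < t -> \det (t%:M + N) != 0.
Proof.
move=> cd tp; apply/negP => /det0P [v nz Hv].
have Hv' : v *m N = (-t) *: v.
  move: Hv; rewrite mulmxDr mul_mx_scalar => /eqP; rewrite addrC addr_eq0 => /eqP ->.
  by rewrite scaleNr.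
have [j Hj] := gersh_max Hv' nz.
have h1 := cd j.
have h0 : 0 <= \sum_(i | i != j) `|N i j| by apply: sumr_ge0 => i _.
move: Hj; rewrite -opprD normrN ger0_norm; last first.
  by apply: addr_ge0; [exact: ltW | exact: le_trans h1].
move=> h2; have := le_trans h2 h1; rewrite gerDr.
by rewrite leNgt tp.
Qed.

Lemma horner_charpoly (F : comNzRingType) n (A : 'M[F]_n) a :
  (char_poly A).[a] = \det (a%:M - A).
Proof.
symmetry; rewrite horner_sum; apply: eq_bigr => s _.
rewrite hornerM horner_exp !hornerE; congr (_ * _).
rewrite (big_morph _ (fun p q => hornerM p q a) (hornerC 1 a)).
by apply: eq_bigr => i _; rewrite !mxE !(hornerE, hornerMn).
Qed.

Lemma coldom_det (R : rcfType) n (N : 'M[R]_n) : coldom N -> 0 <= \det N.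
Proof.
move=> cd; rewrite leNgt; apply/negP => dN.
set p := char_poly (- N).
have lc : 0 < lead_coef p by rewrite (monicP (char_poly_monic _)).
have [b0 Hb] := poly_pinfty_gt_lc lc.
set b := Num.max b0 0.
have sc0 : (0 : R)%:M = 0 :> 'M[R]_n by apply/matrixP => i j; rewrite !mxE mul0rn.
have p0 : p.[0] = \det N by rewrite horner_charpoly sc0 sub0r opprK.
have [x /andP [x0 xb] rx] : exists2 x, 0 <= x <= b & root p x.
  apply: poly_ivt; first by rewrite /b le_max lexx orbT.
  rewrite p0 (ltW dN) /=; apply: le_trans (ltW lc) (Hb _ _).
  by rewrite /b le_max lexx.
move: rx; rewrite /root horner_charpoly opprK.
have [<-|xnz] := eqVneq 0 x.
  by rewrite sc0 add0r => /eqP H; move: dN; rewrite H ltxx.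
by apply/negP/coldom_detD => //; rewrite lt_def eq_sym xnz.
Qed.

Lemma sum_sub_le (R : numDomainType) (I : finType) (P Q : pred I) (f : I -> R) :
  (forall i, 0 <= f i) -> (forall i, P i -> Q i) ->
  \sum_(i | P i) f i <= \sum_(i | Q i) f i.
Proof.
move=> f0 PQ; rewrite [X in _ <= X]big_mkcond [X in X <= _]big_mkcond /=.
apply: ler_sum => i _; case: ifP => Pi; first by rewrite PQ.
by case: ifP.
Qed.

Lemma coldom_principal (R : numDomainType) n (M : 'M[R]_n) S :
  coldom M -> coldom (principal_submx M S).
Proof.
move=> cd j.
have -> : \sum_(i | i != j) `|principal_submx M S i j|
    = \sum_(x in S | x != enum_val j) `|M x (enum_val j)|.
  rewrite big_enum_val_cond /=.
  by apply: eq_big => i; [rewrite (inj_eq enum_val_inj) | rewrite mxE].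
rewrite mxE; apply: le_trans (cd _); apply: sum_sub_le => // i /andP [_ H]; exact: H.
Qed.

Lemma coldom_P0 (R : rcfType) n (M : 'M[R]_n) : coldom M -> P0_matrix M.
Proof. by move=> cd S; apply/coldom_det/coldom_principal. Qed.

Open Scope complex_scope.
Lemma normC_real (R : rcfType) (x : R) : `|x%:C| = (`|x|)%:C.
Proof. by rewrite normc_def /= expr0n /= addr0 sqrtr_sqr. Qed.

Lemma Re_ge0 (R : rcfType) (z : R[i]) (d : R) :
  `|z - d%:C| <= d%:C -> (0 <= complex.Re z)%R.
Proof.
case: z => a b; rewrite normc_def /= lecR => H.
rewrite leNgt; apply/negP => a0.
have h1 : `|a - d| <= d.
  apply: le_trans H; rewrite -sqrtr_sqr; apply: ler_wsqrtr.
  by rewrite lerDl sqr_ge0.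
have d0 : (0 <= d)%R by apply: le_trans H; apply: sqrtr_ge0.
move: h1; rewrite distrC ger0_norm; last by rewrite subr_ge0 (le_trans (ltW a0)).
by rewrite gerDl oppr_le0 leNgt a0.
Qed.

Lemma coldom_semistable (R : rcfType) n (N : 'M[R]_n) :
  coldom N -> pos_semistable N.
Proof.
move=> cd z /eigenvalueP [v Hv nz].
have [j Hj] := gersh_max Hv nz.
apply: (@Re_ge0 _ _ (N j j)).
apply: le_trans (_ : (\sum_(i | i != j) `|N i j|)%:C <= _); last by rewrite lecR; apply: cd.
move: Hj; rewrite mxE; under eq_bigr do rewrite mxE normC_real.
by rewrite rmorph_sum.
Qed.
Close Scope complex_scope.

Lemma abs01 (R : realDomainType) (x : R) : x \in [:: 0; 1; -1] -> `|x| = (x != 0)%:R.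
Proof.
by rewrite !inE => /or3P [] /eqP ->; rewrite ?normr0 ?normr1 ?normrN1 ?eqxx ?oner_eq0 ?oppr_eq0 ?oner_eq0.
Qed.

Lemma col_sum_le1 (R : realDomainType) n m (A : 'M[R]_(n,m)) j k :
  (forall i j, A i j \in [:: 0; 1; -1]) ->
  (#|[set i | A i k != 0%R]| <= 2)%N -> A j k != 0 ->
  \sum_(i | i != j) `|A i k| <= 1.
Proof.
move=> A01 card2 Ajk.
have -> : \sum_(i | i != j) `|A i k| = \sum_(i in [set i | A i k != 0] :\ j) 1.
  rewrite big_mkcond [RHS]big_mkcond /=; apply: eq_bigr => i _.
  rewrite abs01 // !inE; by case: (i != j); case: (A i k != 0).
rewrite sumr_const; have := cardsD1 j [set i | A i k != 0].
rewrite inE Ajk /= => E; move: card2; rewrite E => c.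
by rewrite -[1 in X in _ <= X]/(1%:R) ler_nat -(leq_add2l 1).
Qed.

Lemma coldom_AB (R : realDomainType) n m (A : 'M[R]_(n,m)) (B : 'M[R]_(m,n)) :
  (forall i j, A i j \in [:: 0; 1; -1]) ->
  (forall j, (#|[set i | A i j != 0%R]| <= 2)%N) ->
  in_Q0 A^T B -> coldom (A *m B).
Proof.
move=> A01 card2 hQ j.
apply: le_trans (_ : \sum_(i | i != j) \sum_k `|A i k| * `|B k j| <= _).
  apply: ler_sum => i _; rewrite mxE; apply: le_trans (ler_norm_sum _ _ _) _.
  by apply: ler_sum => k _; rewrite normrM.
rewrite exchange_big /= mxE; apply: ler_sum => k _.
rewrite -mulr_suml.
have [B0|Bnz] := eqVneq (B k j) 0.
  by rewrite B0 normr0 mulr0 mulr0.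
case: (hQ k j) => [/eqP|]; first by rewrite sgr_eq0 (negbTE Bnz).
rewrite mxE => sgE.
have Anz : A j k != 0 by rewrite -sgr_eq0 -sgE sgr_eq0.
have le1 := col_sum_le1 A01 (card2 k) Anz.
have -> : A j k * B k j = `|B k j|.
  move: (A01 j k) sgE Anz; rewrite !inE => /or3P [] /eqP ->; rewrite ?eqxx //.
    by rewrite sgr1 mul1r => /eqP; rewrite sgr_cp0 => /ltW/ger0_norm ->.
  by rewrite sgrN1 mulN1r => /eqP; rewrite sgr_cp0 => /ltW/ler0_norm ->.
by rewrite mulrC ler_piMr.
Qed.

Lemma sum_ind (R : pzSemiRingType) (I : finType) (P : pred I) j (F : I -> R) :
  \sum_(l | P l) (j == l)%:R * F l = (P j)%:R * F j.
Proof.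
rewrite big_mkcond (bigD1 j) //= big1 ?addr0.
  by have -> : (j == j) = true := eqxx j; case: (P j); rewrite ?mul1r ?mul0r.
by move=> l /negbTE; rewrite eq_sym => ->; case: (P l); rewrite ?mul0r.
Qed.

Lemma sum_cond (R : pzSemiRingType) (I : finType) (P : pred I) (F : I -> R) :
  \sum_(l | P l) F l = \sum_l (P l)%:R * F l.
Proof. by rewrite big_mkcond; apply: eq_bigr => l _; case: (P l); rewrite ?mul1r ?mul0r. Qed.

Lemma sum_wedge (R : nmodType) n (F : 'I_n -> 'I_n -> R) :
  \sum_(r < size (wedge_pairs n)) F (wp r).1 (wp r).2 = \sum_(k < n) \sum_(l < n | (k < l)%N) F k l.
Proof.
rewrite /wp -(big_tnth _ _ _ predT (fun p => F p.1 p.2)).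
rewrite /wedge_pairs big_allpairs_dep /= big_enum /=.
by apply: eq_bigr => k _; rewrite big_filter big_enum_cond.
Qed.

Lemma wedge_lt n (c : 'I_(size (wedge_pairs n))) : ((wp c).1 < (wp c).2)%N.
Proof.
have := mem_tnth c (in_tuple (wedge_pairs n)); rewrite -/(wp c).
case: (wp c) => i j /allpairsPdep [a [b [_]]]; rewrite mem_filter => /andP [ab _] [-> ->] //.
Qed.

Lemma norm4 (R : numDomainType) (x1 x2 x3 x4 : R) :
  `|x1 - x2 + x3 - x4| <= `|x1| + `|x2| + `|x3| + `|x4|.
Proof.
apply: le_trans (ler_normB _ _) _; rewrite lerD2r.
apply: le_trans (ler_normD _ _) _; rewrite lerD2r.
exact: ler_normB.
Qed.

Lemma coldom_compound2 (R : realFieldType) n (M : 'M[R]_n) :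
  coldom M -> coldom (compound2 M).
Proof.
move=> cd c.
have hlt := wedge_lt c.
case Ec: (wp c) hlt => [i j] /= hij.
have nij : i != j by rewrite neq_ltn hij.
pose a := fun p : 'I_n => (`|M p i| : R).
pose b := fun p : 'I_n => (`|M p j| : R).
pose G (k l : 'I_n) := (j == l)%:R * a k + (j == k)%:R * a l + (i == k)%:R * b l + (i == l)%:R * b k.
have Hdiag : compound2 M c c = M i i + M j j.
  rewrite mxE Ec /= !eqxx (eq_sym j i) (negbTE nij).
  by rewrite !mul1r !mul0r subr0 subr0.
have Hent : forall r, `|compound2 M r c| <= G (wp r).1 (wp r).2.
  move=> r; rewrite mxE Ec; case: (wp r) => k l /=.
  apply: le_trans (norm4 _ _ _ _) _.
  by rewrite !normrM !normr_nat.
have a0 : forall p, 0 <= a p by move=> p; exact: normr_ge0.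
have b0 : forall p, 0 <= b p by move=> p; exact: normr_ge0.
have tot : \sum_r G (wp r).1 (wp r).2 = G i j + \sum_(r | r != c) G (wp r).1 (wp r).2.
  by rewrite (bigD1 c) //= Ec.
have Gij : G i j = a i + b j.
  by rewrite /G !eqxx (eq_sym j i) (negbTE nij) !mul1r !mul0r addr0 addr0.
have total_le : \sum_r G (wp r).1 (wp r).2 <= \sum_p a p + \sum_p b p.
  rewrite sum_wedge /G.
  under eq_bigr => k _ do rewrite !big_split /=.
  rewrite !big_split /=.
  under eq_bigr => k _ do rewrite (sum_ind (fun l : 'I_n => (k < l)%N) j (fun _ => a k)).
  have T2 : forall (x : 'I_n) (f : 'I_n -> R),
      \sum_(k < n) \sum_(l < n | (k < l)%N) (x == k)%:R * f l = \sum_(l < n | (x < l)%N) f l.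
    move=> x f; under eq_bigr => k _ do rewrite -mulr_sumr.
    by rewrite (sum_ind (fun _ => true) x (fun k => \sum_(l < n | (k < l)%N) f l)) mul1r.
  have T4 : forall (x : 'I_n) (f : 'I_n -> R),
      \sum_(k < n) \sum_(l < n | (k < l)%N) (x == l)%:R * f k = \sum_(k < n) (k < x)%:R * f k.
    move=> x f; apply: eq_bigr => k _.
    exact: (sum_ind (fun l : 'I_n => (k < l)%N) x (fun _ => f k)).
  rewrite T2 T2 T4 (sum_cond (fun l : 'I_n => (j < l)%N)) (sum_cond (fun l : 'I_n => (i < l)%N)).
  have W : forall (x y : nat) (t : R), 0 <= t -> (x < y)%:R * t + (y < x)%:R * t <= t.
    by move=> x y t t0; case: (ltngtP x y) => _; rewrite ?mul1r ?mul0r ?addr0 ?add0r.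
  rewrite -addrA; apply: lerD; rewrite -big_split /=; apply: ler_sum => k _.
    exact: W.
  by rewrite addrC; apply: W.
rewrite Hdiag.
have H1 : \sum_(r | r != c) `|compound2 M r c| <= \sum_(r | r != c) G (wp r).1 (wp r).2.
  by apply: ler_sum => r _; apply: Hent.
have Sa : \sum_p a p = a i + \sum_(p | p != i) a p by rewrite (bigD1 i).
have Sb : \sum_p b p = b j + \sum_(p | p != j) b p by rewrite (bigD1 j).
have ci : \sum_(p | p != i) a p <= M i i := cd i.
have cj : \sum_(p | p != j) b p <= M j j := cd j.
move: H1 tot Gij total_le Sa Sb ci cj.
set X1 := \sum_(r | r != c) `|compound2 M r c|.
set X2 := \sum_(r | r != c) G (wp r).1 (wp r).2.
set X3 := \sum_r G (wp r).1 (wp r).2.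
set X4 := \sum_p a p. set X5 := \sum_p b p.
set X6 := \sum_(p | p != i) a p. set X7 := \sum_(p | p != j) b p.
set X8 := G i j.
move=> *; lra.
Qed.

Lemma eig_tr (F : fieldType) n (g : 'M[F]_n) a : eigenvalue g a -> eigenvalue g^T a.
Proof.
move=> /eigenvalueP [v Hv nz].
have d0 : \det (a%:M - g) == 0.
  by apply/det0P; exists v => //; rewrite mulmxBr Hv mul_mx_scalar subrr.
have : \det (a%:M - g^T) == 0.
  by rewrite (_ : a%:M - g^T = (a%:M - g)^T) ?det_tr // linearB /= tr_scalar_mx.
case/det0P => w nzw; rewrite mulmxBr mul_mx_scalar => /eqP; rewrite subr_eq0 => /eqP E.
by apply/eigenvalueP; exists w.
Qed.

Lemma semistable_rows (R : rcfType) n m (A : 'M[R]_(n, m)) (B : 'M[R]_(m, n)) :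
  (forall i j, A i j \in [:: 0; 1; -1 : R]) ->
  (forall i, (#|[set j | A i j != 0%R]| <= 2)%N) ->
  in_Q0 A^T B -> pos_semistable (A *m B).
Proof.
move=> A01 hr hQ.
have cd : coldom (A^T *m B^T).
  apply: coldom_AB.
  - by move=> i j; rewrite mxE.
  - move=> j; apply: leq_trans (hr j); apply: subset_leq_card.
    by apply/subsetP => i; rewrite !inE mxE.
  - by move=> i j; rewrite trmxK !mxE; case: (hQ j i); rewrite ?mxE; [left|right].
move=> z /eig_tr /eigenvalueP [v Hv nz].
move: Hv; rewrite map_trmx trmx_mul map_mxM.
set w := v *m map_mx (real_complex R) B^T => Hv.
have [w0|wnz] := eqVneq w 0.
  move: Hv; rewrite mulmxA -/w w0 mul0mx => /esym /eqP; rewrite scalemx_eq0 (negbTE nz) orbF.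
  by move=> /eqP ->.
apply: (coldom_semistable cd); apply/eigenvalueP; exists w => //.
by rewrite map_mxM mulmxA /w -(mulmxA v) Hv -scalemxAl.
Qed.

Unset Implicit Arguments.
Set Strict Implicit.
Theorem proposition4p2 (R : rcfType) (n m : nat) (A : 'M[R]_(n, m)) :
  (2 <= n)%N ->
  (forall i j, A i j \in [:: 0; 1; -1 : R]) ->
  ((forall j, (#|[set i | A i j != 0%R]| <= 2)%N) ->
     forall B : 'M[R]_(m, n), in_Q0 A^T B ->
       P0_matrix (A *m B) /\ P0_matrix (compound2 (A *m B)) /\
       pos_semistable (A *m B)) /\
  ((forall i, (#|[set j | A i j != 0%R]| <= 2)%N) ->
     forall B : 'M[R]_(m, n), in_Q0 A^T B ->
       pos_semistable (A *m B)).
Proof.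
move=> _ A01; split.
  move=> hc B hQ; have cd := coldom_AB A01 hc hQ.
  split; first exact: coldom_P0.
  split; first by apply: coldom_P0; apply: coldom_compound2.
  exact: coldom_semistable.
by move=> hr B hQ; apply: semistable_rows.
Qed.
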